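(* Let $K$ be a field and let $L\in K^{n\times n}[s]$, $L_1\in K^{n_1\times n_1}[s]$ be nonsingular polynomial matrices. For $\Theta\in K^{n_1\times n}_\infty(s)$ the inclusion $$\Theta\,\operatorname{Ker}\rho^L\subseteq\operatorname{Ker}\rho^{L_1}$$ holds if and only if there exist a matrix $\Theta_1\in K^{n_1\times n}_\infty(s)$ and a matrix $\Psi$ with $\Psi\in s^{-1}K^{n_1\times n}_\infty(s)$ and $L_1\Psi\in K^{n_1\times n}_\infty(s)$ such that $$(\Theta+L_1\Psi)L=L_1\Theta_1.$$
   Context: $K(s)$ denotes the field of rational functions over $K$. A rational function $f$ is proper if $f=0$ or $f=p/q$ with $p,q\in K[s]$, $q\ne0$, $\deg p\le\deg q$; $K_\infty(s)$ is the ring of proper rational functions, and $K^n_\infty(s)$, $K^{m\times r}_\infty(s)$ denote vectors/matrices with proper rational entries. One has $K(s)=K[s]\oplus s^{-1}K_\infty(s)$; $\pi_+:K(s)\to K[s]$ denotes the projection onto the polynomial part along $s^{-1}K_\infty(s)$, extended entrywise to vectors and matrices. For a nonsingular $L\in K^{n\times n}[s]$, define $\rho^L:K^n_\infty(s)\to K^n[s]$ by $\rho^L x=L\,\pi_+(L^{-1}x)$. (One has $\operatorname{Ker}\rho^L=K^n_\infty(s)\cap s^{-1}LK^n_\infty(s)$.) *)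

(* Defs.v *)
From HB Require Import structures.
From mathcomp Require Import all_boot all_order all_algebra.
From Stdlib Require Import ClassicalEpsilon.
Set Implicit Arguments. Unset Strict Implicit. Unset Printing Implicit Defensive.
Import GRing.Theory.
Local Open Scope ring_scope.

Section RatFun.
Variable K : fieldType.

Definition ratf := {fraction {poly K}}.
Definition polyF (p : {poly K}) : ratf := tofrac p.

Definition proper (f : ratf) : Prop :=
  f = 0 \/ exists p q : {poly K},
    q != 0 /\ (size p <= size q)%N /\ f = polyF p / polyF q.

Definition sproper (f : ratf) : Prop :=
  exists g : ratf, proper g /\ f = (polyF 'X)^-1 * g.

(* pi_+ : projection onto K[s] along s^{-1}K_oo(s) in K(s) = K[s] (+) s^{-1}K_oo(s) *)
Definition pi_plus (f : ratf) : {poly K} :=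
  epsilon (inhabits 0) (fun p : {poly K} => sproper (f - polyF p)).

Definition proper_mx m n (A : 'M[ratf]_(m, n)) : Prop := forall i j, proper (A i j).
Definition sproper_mx m n (A : 'M[ratf]_(m, n)) : Prop := forall i j, sproper (A i j).

Definition polymx m n (A : 'M[{poly K}]_(m, n)) : 'M[ratf]_(m, n) := map_mx polyF A.

Definition rho n (L : 'M[{poly K}]_n) (x : 'cV[ratf]_n) : 'cV[{poly K}]_n :=
  L *m map_mx pi_plus (invmx (polymx L) *m x).

Definition in_ker_rho n (L : 'M[{poly K}]_n) (x : 'cV[ratf]_n) : Prop :=
  proper_mx x /\ rho L x = 0.

End RatFun.

(* Main.v *)
Require Import Defs.
From HB Require Import structures.
From mathcomp Require Import all_boot all_order all_algebra.
From mathcomp Require Import fingroup perm.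
From Stdlib Require Import ClassicalEpsilon.
Import Defs.
From mathcomp Require Import zify.
Set Implicit Arguments. Unset Strict Implicit. Unset Printing Implicit Defensive.
Import GRing.Theory.
Local Open Scope ring_scope.

Section Basics.
Variable K : fieldType.
Local Notation F := (ratf K).
Local Notation pF := (@polyF K).
Implicit Types f g : F.

Lemma ratf_rep (f : F) : exists p q : {poly K}, q != 0 /\ f = pF p / pF q.
Proof.
elim/quotP: f => r _.
exists (r.1), (r.2); split; first exact: denom_ratioP.
rewrite /polyF; unlock tofrac.
have -> : forall a b : {fraction {poly K}}, a / b = FracField.mul a (FracField.inv b) by [].
rewrite -FracField.pi_inv -FracField.pi_mul.
rewrite /FracField.mulf /FracField.invf /= !numden_Ratio ?oner_neq0 //.
rewrite mulr1 mul1r Ratio_numden.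
by [].
exact: denom_ratioP. exact: denom_ratioP.
Qed.

Local Notation x := (pF 'X).

Lemma pF_eq0 (p : {poly K}) : (pF p == 0) = (p == 0).
Proof. exact: tofrac_eq0. Qed.

Lemma pFD : {morph pF : a b / a + b}. Proof. exact: tofracD. Qed.
Lemma pFM : {morph pF : a b / a * b}. Proof. exact: tofracM. Qed.
Lemma pFN : {morph pF : a / - a}. Proof. exact: tofracN. Qed.
Lemma pFB : {morph pF : a b / a - b}. Proof. exact: tofracB. Qed.
Lemma pF0 : pF 0 = 0. Proof. exact: tofrac0. Qed.
Lemma pF1 : pF 1 = 1. Proof. exact: tofrac1. Qed.

Lemma x_neq0 : x != 0.
Proof. by rewrite pF_eq0 polyX_eq0. Qed.

Lemma properP f : proper f <-> exists p q : {poly K}, q != 0 /\ (size p <= size q)%N /\ f = pF p / pF q.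
Proof.
split; last by move=> h; right.
case=> // ->; exists 0, 1; rewrite oner_neq0 size_poly0 /=; split => //.
by rewrite pF0 mul0r.
Qed.

Lemma properI (p q : {poly K}) : q != 0 -> (size p <= size q)%N -> proper (pF p / pF q).
Proof. by move=> *; right; exists p, q. Qed.

Lemma sproperI (p q : {poly K}) : q != 0 -> (size p < size q)%N -> sproper (pF p / pF q).
Proof.
move=> q0 hs; exists (pF (p * 'X) / pF q); split.
  apply: properI => //; have [->|p0] := eqVneq p 0; first by rewrite mul0r size_poly0.
  by rewrite size_mulX.
by rewrite pFM mulrAC mulrCA mulVf ?x_neq0 // mulr1.
Qed.

Lemma proper0 : proper (0 : F). Proof. by left. Qed.

Lemma properC (c : K) : proper (pF c%:P).
Proof.
rewrite -[pF _]divr1 -pF1; apply: properI; first exact: oner_neq0.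
by rewrite size_polyC size_poly1 leq_b1.
Qed.

Lemma proper1 : proper (1 : F). Proof. by rewrite -pF1 -polyC1; apply: properC. Qed.

Lemma properM f g : proper f -> proper g -> proper (f * g).
Proof.
move=> /properP[p [q [q0 [hs ->]]]] /properP[p' [q' [q0' [hs' ->]]]].
have -> : pF p / pF q * (pF p' / pF q') = pF (p * p') / pF (q * q').
  by rewrite !pFM mulf_div.
apply: properI; first by rewrite mulf_neq0.
have [->|p0] := eqVneq p 0; first by rewrite mul0r size_poly0.
have [->|p0'] := eqVneq p' 0; first by rewrite mulr0 size_poly0.
rewrite !size_mul //; rewrite -!subn1 leq_sub2r //; exact: leq_add.
Qed.

Lemma properN f : proper f -> proper (- f).
Proof.
move=> /properP[p [q [q0 [hs ->]]]]; rewrite -mulNr -pFN; apply: properI => //.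
by rewrite size_polyN.
Qed.

Lemma properD f g : proper f -> proper g -> proper (f + g).
Proof.
move=> /properP[p [q [q0 [hs ->]]]] /properP[p' [q' [q0' [hs' ->]]]].
have pq0 : pF q != 0 by rewrite pF_eq0.
have pq0' : pF q' != 0 by rewrite pF_eq0.
have -> : pF p / pF q + pF p' / pF q' = pF (p * q' + p' * q) / pF (q * q').
  by rewrite pFD !pFM (addf_div _ _ pq0 pq0').
apply: properI; first by rewrite mulf_neq0.
apply: leq_trans (size_polyD _ _) _; rewrite geq_max; apply/andP; split.
  have [->|p0] := eqVneq p 0; first by rewrite mul0r size_poly0.
  rewrite !size_mul // -!subn1 leq_sub2r // leq_add2r //.
have [->|p0] := eqVneq p' 0; first by rewrite mul0r size_poly0.
rewrite !size_mul // -!subn1 leq_sub2r // addnC leq_add2l //.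
Qed.

Lemma properB f g : proper f -> proper g -> proper (f - g).
Proof. by move=> hf hg; apply: properD => //; apply: properN. Qed.

Lemma proper_t : proper x^-1.
Proof.
rewrite -[_^-1]mul1r -pF1; apply: properI; first by rewrite polyX_eq0.
by rewrite size_poly1 size_polyX.
Qed.

Lemma sproperX f : sproper f <-> proper (x * f).
Proof.
split; first by case=> g [pg ->]; rewrite mulrA mulfV ?x_neq0 // mul1r.
by move=> h; exists (x * f); split => //; rewrite mulrA mulVf ?x_neq0 // mul1r.
Qed.

Lemma sproper_proper f : sproper f -> proper f.
Proof. by case=> g [pg ->]; apply: properM => //; apply: proper_t. Qed.

Lemma sproper0 : sproper (0 : F). Proof. by apply/sproperX; rewrite mulr0; apply: proper0. Qed.

Lemma sproperD f g : sproper f -> sproper g -> sproper (f + g).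
Proof. by move=> /sproperX hf /sproperX hg; apply/sproperX; rewrite mulrDr; apply: properD. Qed.

Lemma sproperN f : sproper f -> sproper (- f).
Proof. by move=> /sproperX hf; apply/sproperX; rewrite mulrN; apply: properN. Qed.

Lemma sproperB f g : sproper f -> sproper g -> sproper (f - g).
Proof. by move=> hf hg; apply: sproperD => //; apply: sproperN. Qed.

Lemma sproperMl f g : proper f -> sproper g -> sproper (f * g).
Proof. by move=> hf /sproperX hg; apply/sproperX; rewrite mulrCA; apply: properM. Qed.

Lemma sproperMr f g : sproper f -> proper g -> sproper (f * g).
Proof. by move=> hf hg; rewrite mulrC; apply: sproperMl. Qed.

Lemma sproper_t : sproper x^-1.
Proof. by apply/sproperX; rewrite mulfV ?x_neq0 //; apply: proper1. Qed.

Lemma sproper_pF (p : {poly K}) : sproper (pF p) -> p = 0.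
Proof.
case=> g [/properP[a [b [b0 [hs ->]]]] e].
have : pF ('X * p * b) = pF a.
  rewrite !pFM e mulrA mulrA mulfV ?x_neq0 // mul1r mulfVK //.
  by rewrite pF_eq0.
move/eqP; rewrite tofrac_eq => /eqP e2.
apply/eqP; apply: contraTT hs => p0; rewrite -ltnNge -e2.
rewrite -mulrA size_mul ?polyX_eq0 ?mulf_neq0 // size_polyX size_mul //.
have hp : (0 < size p)%N by rewrite size_poly_gt0.
case: (size p) hp => // k _; rewrite addSn /= ltnS leq_addl //.
Qed.

Lemma pi_plusP f : sproper (f - pF (pi_plus f)).
Proof.
rewrite /pi_plus; apply: (epsilon_spec (inhabits 0) (fun p => sproper (f - pF p))).
have [p [q [q0 ->]]] := ratf_rep f.
exists (p %/ q).
have pq0 : pF q != 0 by rewrite pF_eq0.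
have -> : pF p / pF q - pF (p %/ q) = pF (p %% q) / pF q.
  rewrite {1}(divp_eq p q) pFD pFM mulrDl mulfK // addrAC subrr add0r //.
by apply: sproperI => //; rewrite ltn_modp.
Qed.

Lemma pi_plus_eq f (p : {poly K}) : sproper (f - pF p) -> pi_plus f = p.
Proof.
move=> h; have h2 := pi_plusP f.
have : sproper (pF (p - pi_plus f)).
  have -> : pF (p - pi_plus f) = (f - pF (pi_plus f)) - (f - pF p).
    by rewrite pFB [RHS]addrC opprB addrA subrK.
  exact: sproperB.
by move/sproper_pF/eqP; rewrite subr_eq0 => /eqP.
Qed.

Lemma pi_plus_sproper f : sproper f -> pi_plus f = 0.
Proof. by move=> h; apply: pi_plus_eq; rewrite pF0 subr0. Qed.

Lemma proper_total f g : f != 0 -> g != 0 -> proper (f / g) \/ proper (g / f).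
Proof.
have [p [q [q0 ->]]] := ratf_rep f; have [p' [q' [q0' ->]]] := ratf_rep g.
have pq0 : pF q != 0 by rewrite pF_eq0.
have pq0' : pF q' != 0 by rewrite pF_eq0.
move=> hf hg.
have p0 : p != 0 by apply: contraNneq hf => ->; rewrite pF0 mul0r.
have p0' : p' != 0 by apply: contraNneq hg => ->; rewrite pF0 mul0r.
have -> : pF p / pF q / (pF p' / pF q') = pF (p * q') / pF (q * p').
  by rewrite !pFM invf_div mulf_div.
have -> : pF p' / pF q' / (pF p / pF q) = pF (q * p') / pF (p * q').
  by rewrite !pFM invf_div mulf_div [pF p' * _]mulrC [pF q' * _]mulrC.
case: (leqP (size (p * q')) (size (q * p'))) => h.
  by left; apply: properI; rewrite ?mulf_neq0.
by right; apply: properI; rewrite ?mulf_neq0 // ltnW.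
Qed.

Lemma notproper_inv f : ~ proper f -> sproper f^-1.
Proof.
have [p [q [q0 ->]]] := ratf_rep f => np.
case: (leqP (size p) (size q)) => h; first by case: np; apply: properI.
have p0 : p != 0 by rewrite -size_poly_gt0 (leq_ltn_trans _ h).
by rewrite invf_div; apply: sproperI.
Qed.

End Basics.

Section Mx.
Variable K : fieldType.
Local Notation F := (ratf K).
Local Notation pF := (@polyF K).
Local Notation x := (pF 'X).

Lemma proper_mx0 m n : proper_mx (0 : 'M[F]_(m, n)).
Proof. by move=> i j; rewrite mxE; apply: proper0. Qed.

Lemma proper_mx1 n : proper_mx (1%:M : 'M[F]_n).
Proof.
move=> i j; rewrite mxE; case: (i == j) => /=; first exact: proper1.
exact: proper0.
Qed.

Lemma proper_mxD m n (A B : 'M[F]_(m, n)) : proper_mx A -> proper_mx B -> proper_mx (A + B).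
Proof. by move=> hA hB i j; rewrite mxE; apply: properD. Qed.

Lemma proper_mxN m n (A : 'M[F]_(m, n)) : proper_mx A -> proper_mx (- A).
Proof. by move=> hA i j; rewrite mxE; apply: properN. Qed.

Lemma proper_mxB m n (A B : 'M[F]_(m, n)) : proper_mx A -> proper_mx B -> proper_mx (A - B).
Proof. by move=> hA hB; apply: proper_mxD => //; apply: proper_mxN. Qed.

Lemma proper_mxM m n p (A : 'M[F]_(m, n)) (B : 'M[F]_(n, p)) :
  proper_mx A -> proper_mx B -> proper_mx (A *m B).
Proof.
move=> hA hB i j; rewrite mxE; apply: (big_ind (@proper K)); first exact: proper0.
  by move=> ? ?; apply: properD.
by move=> k _; apply: properM.
Qed.

Lemma proper_mxZ m n c (A : 'M[F]_(m, n)) : proper c -> proper_mx A -> proper_mx (c *: A).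
Proof. by move=> hc hA i j; rewrite mxE; apply: properM. Qed.

Lemma sproper_mxX m n (A : 'M[F]_(m, n)) : sproper_mx A <-> proper_mx (x *: A).
Proof.
split=> h i j; first by rewrite mxE; apply/sproperX.
by apply/sproperX; have := h i j; rewrite mxE.
Qed.

Lemma sproper_proper_mx m n (A : 'M[F]_(m, n)) : sproper_mx A -> proper_mx A.
Proof. by move=> h i j; apply: sproper_proper. Qed.

Lemma sproper_mx0 m n : sproper_mx (0 : 'M[F]_(m, n)).
Proof. by move=> i j; rewrite mxE; apply: sproper0. Qed.

Lemma sproper_mxD m n (A B : 'M[F]_(m, n)) : sproper_mx A -> sproper_mx B -> sproper_mx (A + B).
Proof. by move=> hA hB i j; rewrite mxE; apply: sproperD. Qed.

Lemma sproper_mxN m n (A : 'M[F]_(m, n)) : sproper_mx A -> sproper_mx (- A).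
Proof. by move=> hA i j; rewrite mxE; apply: sproperN. Qed.

Lemma sproper_mxB m n (A B : 'M[F]_(m, n)) : sproper_mx A -> sproper_mx B -> sproper_mx (A - B).
Proof. by move=> hA hB; apply: sproper_mxD => //; apply: sproper_mxN. Qed.

Lemma sproper_mxMl m n p (A : 'M[F]_(m, n)) (B : 'M[F]_(n, p)) :
  proper_mx A -> sproper_mx B -> sproper_mx (A *m B).
Proof.
by move=> hA /sproper_mxX hB; apply/sproper_mxX; rewrite scalemxAr; apply: proper_mxM.
Qed.

Lemma sproper_mxMr m n p (A : 'M[F]_(m, n)) (B : 'M[F]_(n, p)) :
  sproper_mx A -> proper_mx B -> sproper_mx (A *m B).
Proof.
by move=> /sproper_mxX hA hB; apply/sproper_mxX; rewrite scalemxAl; apply: proper_mxM.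
Qed.

Lemma polymx_unit n (L : 'M[{poly K}]_n) : \det L != 0 -> polymx L \in unitmx.
Proof.
move=> hL; rewrite unitmxE unitfE.
have -> : \det (polymx L) = tofrac (\det L).
  by rewrite /polymx /polyF; exact: (det_map_mx (@tofrac _)).
by rewrite tofrac_eq0.
Qed.

Lemma polymxM m n p (A : 'M[{poly K}]_(m, n)) (B : 'M_(n, p)) :
  polymx (A *m B) = polymx A *m polymx B.
Proof. by rewrite /polymx /polyF; exact: (map_mxM (@tofrac _)). Qed.

Lemma ker_rho_sproper n (L : 'M[{poly K}]_n) (v : 'cV[F]_n) :
  \det L != 0 -> in_ker_rho L v -> sproper_mx (invmx (polymx L) *m v).
Proof.
move=> hL [hv hr].
have h0 : map_mx (@pi_plus K) (invmx (polymx L) *m v) = 0.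
  move: hr; rewrite /rho => /(congr1 (mulmx (\adj L))).
  rewrite mulmxA mul_adj_mx mul_scalar_mx mulmx0 => /eqP.
  by rewrite scalemx_eq0 (negPf hL) /= => /eqP.
move=> i j; have := pi_plusP ((invmx (polymx L) *m v) i j).
have -> : pi_plus ((invmx (polymx L) *m v) i j) = 0.
  by move/matrixP: h0 => /(_ i j); rewrite !mxE.
by rewrite pF0 subr0.
Qed.

Lemma sproper_ker_rho n (L : 'M[{poly K}]_n) (v : 'cV[F]_n) :
  proper_mx v -> sproper_mx (invmx (polymx L) *m v) -> in_ker_rho L v.
Proof.
move=> hv hs; split => //; rewrite /rho.
have -> : map_mx (@pi_plus K) (invmx (polymx L) *m v) = 0.
  by apply/matrixP=> i j; rewrite [in LHS]mxE (pi_plus_sproper (hs i j)) mxE.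
by rewrite mulmx0.
Qed.

End Mx.

Definition biproper (K : fieldType) n (V : 'M[ratf K]_n) :=
  exists V', [/\ proper_mx V, proper_mx V' & V *m V' = 1%:M].

Section Smith.
Variable K : fieldType.
Local Notation F := (ratf K).

Lemma proper_block m1 m2 n1 n2 (Aul : 'M[F]_(m1, n1)) (Aur : 'M_(m1, n2))
  (Adl : 'M_(m2, n1)) (Adr : 'M_(m2, n2)) :
  proper_mx Aul -> proper_mx Aur -> proper_mx Adl -> proper_mx Adr ->
  proper_mx (block_mx Aul Aur Adl Adr).
Proof.
move=> h1 h2 h3 h4 i j.
case: (split_ordP i) => i' ->; case: (split_ordP j) => j' ->.
- by rewrite block_mxEul.
- by rewrite block_mxEur.
- by rewrite block_mxEdl.
- by rewrite block_mxEdr.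
Qed.

Lemma biproper1 n : biproper (1%:M : 'M[F]_n).
Proof. by exists 1%:M; split; rewrite ?mulmx1 //; apply: proper_mx1. Qed.

Lemma biproperM n (A B : 'M[F]_n) : biproper A -> biproper B -> biproper (A *m B).
Proof.
move=> [A' [hA hA' eA]] [B' [hB hB' eB]]; exists (B' *m A'); split.
- exact: proper_mxM.
- exact: proper_mxM.
by rewrite mulmxA -(mulmxA A B B') eB mulmx1 eA.
Qed.

Lemma proper_perm n (s : 'S_n) : proper_mx (perm_mx s : 'M[F]_n).
Proof.
move=> i j; rewrite !mxE; case: (s i == j) => /=; rewrite ?mulr1n ?mulr0n.
  exact: proper1.
exact: proper0.
Qed.

Lemma biproper_perm n (s : 'S_n) : biproper (perm_mx s : 'M[F]_n).
Proof.
exists (perm_mx s^-1); split; try exact: proper_perm.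
by rewrite -perm_mxM mulgV perm_mx1.
Qed.

Lemma biproper_lblock n (C : 'M[F]_(n, 1)) : proper_mx C ->
  biproper (block_mx 1%:M 0 C 1%:M : 'M_(1 + n)).
Proof.
move=> hC; exists (block_mx 1%:M 0 (- C) 1%:M); split.
- by apply: proper_block => //; (apply: proper_mx1 || apply: proper_mx0).
- by apply: proper_block => //; (apply: proper_mx1 || apply: proper_mx0 || apply: proper_mxN).
rewrite mulmx_block !mulmx1 !mul1mx !mulmx0 !mul0mx !addr0 !add0r subrr.
by rewrite -scalar_mx_block.
Qed.

Lemma biproper_ublock n (R : 'M[F]_(1, n)) : proper_mx R ->
  biproper (block_mx 1%:M R 0 1%:M : 'M_(1 + n)).
Proof.
move=> hR; exists (block_mx 1%:M (- R) 0 1%:M); split.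
- by apply: proper_block => //; (apply: proper_mx1 || apply: proper_mx0).
- by apply: proper_block => //; (apply: proper_mx1 || apply: proper_mx0 || apply: proper_mxN).
rewrite mulmx_block !mulmx1 !mul1mx !mulmx0 !mul0mx !addr0 !add0r addrC subrr.
by rewrite -scalar_mx_block.
Qed.

Lemma biproper_dblock n (V : 'M[F]_n) : biproper V ->
  biproper (block_mx 1%:M 0 0 V : 'M_(1 + n)).
Proof.
move=> [V' [hV hV' e]]; exists (block_mx 1%:M 0 0 V'); split.
- by apply: proper_block => //; (apply: proper_mx1 || apply: proper_mx0).
- by apply: proper_block => //; (apply: proper_mx1 || apply: proper_mx0).
rewrite mulmx_block !mulmx1 !mul1mx !mulmx0 !mul0mx !addr0 !add0r e.
by rewrite -scalar_mx_block.
Qed.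


Lemma max_seq (s : seq F) : has (fun y => y != 0) s ->
  exists2 a, a \in s & a != 0 /\ forall b, b \in s -> proper (b / a).
Proof.
elim: s => //= b s IH /orP hb.
have hbb : b != 0 -> proper (b / b) by move=> b0; rewrite mulfV //; apply: proper1.
case h: (has (fun y => y != 0) s).
  have [a ain [a0 ha]] := IH h.
  have [b0|b0] := eqVneq b 0.
    exists a; first by rewrite inE ain orbT.
    split=> // c; rewrite inE => /orP[/eqP ->|/ha //].
    by rewrite b0 mul0r; apply: proper0.
  have [hba|hab] := proper_total b0 a0.
    exists a; first by rewrite inE ain orbT.
    by split=> // c; rewrite inE => /orP[/eqP ->|/ha //].
  exists b; first by rewrite inE eqxx.
  split=> // c; rewrite inE => /orP[/eqP ->|cin]; first exact: hbb.
  have -> : c / b = (c / a) * (a / b) by rewrite mulrA (divfK a0).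
  by apply: properM => //; apply: ha.
case: hb => [b0|]; last by rewrite h.
exists b; first by rewrite inE eqxx.
split=> // c; rewrite inE => /orP[/eqP ->|cin]; first exact: hbb.
move/negbT/hasPn: h => /(_ c cin); rewrite negbK => /eqP ->.
by rewrite mul0r; apply: proper0.
Qed.

Lemma max_entry m n (A : 'M[F]_(m, n)) : (exists i j, A i j != 0) ->
  exists i j, A i j != 0 /\ forall k l, proper (A k l / A i j).
Proof.
move=> [i [j hij]].
pose s := [seq A k.1 k.2 | k <- enum {: 'I_m * 'I_n}].
have hs : has (fun y => y != 0) s.
  apply/hasP; exists (A i j) => //; apply/mapP; exists (i, j) => //.
  by rewrite mem_enum.
have [a /mapP[[k l] _ ->] [a0 ha]] := max_seq hs.
exists k, l; split => // k' l'; apply: ha; apply/mapP; exists (k', l') => //.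
by rewrite mem_enum.
Qed.


Lemma block_diag3 n (a : F) (V D W : 'M[F]_n) :
  block_mx 1%:M 0 0 V *m block_mx a%:M 0 0 D *m block_mx 1%:M 0 0 W
  = block_mx a%:M 0 0 (V *m D *m W) :> 'M_(1 + n).
Proof.
rewrite !mulmx_block !mulmx1 !mul1mx !mulmx0 !mul0mx !addr0 !add0r.
by rewrite mul0mx.
Qed.

Lemma smith n (A : 'M[F]_n) : A \in unitmx ->
  exists V W (d : 'rV[F]_n),
    [/\ biproper V, biproper W, (forall i, d 0 i != 0) & A = V *m diag_mx d *m W].
Proof.
have pm0 : forall m (M : 'M[F]_(0, m)), proper_mx M.
  by move=> m M i; have := ltn_ord i; rewrite ltn0.
have m0 : forall (M N : 'M[F]_0), M = N.
  by move=> M N; apply/matrixP => i; have := ltn_ord i; rewrite ltn0.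
elim: n A => [|n IH] A uA.
  exists (1%:M : 'M[F]_0), (1%:M : 'M[F]_0), (0 : 'rV[F]_0); split.
  - exists (1%:M : 'M[F]_0); split; [exact: pm0 | exact: pm0 | exact: m0].
  - exists (1%:M : 'M[F]_0); split; [exact: pm0 | exact: pm0 | exact: m0].
  - move=> i; exfalso; move: (ltn_ord i); rewrite ltn0; exact: notF.
  exact: m0.
have [i0 [j0 [a0 ha]]] : exists i j, A i j != 0 /\ forall k l, proper (A k l / A i j).
  apply: max_entry.
  case: (pickP (fun k : 'I_n.+1 * 'I_n.+1 => A k.1 k.2 != 0)) => [[i j] h|h].
    by exists i, j.
  have A0 : A = 0.
    by apply/matrixP => i j; rewrite mxE; move: (h (i, j)) => /= /negbFE/eqP.
  by move: uA; rewrite A0 unitmxE det0 unitr0.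
pose s1 := tperm 0 i0; pose s2 := tperm 0 j0.
pose A1 : 'M[F]_(1 + n) := row_perm s1 (col_perm s2 A).
have eA1 : A1 = perm_mx s1 *m A *m perm_mx s2^-1.
  by rewrite /A1 row_permE col_permE mulmxA.
have eA : A = perm_mx s1^-1 *m A1 *m perm_mx s2.
  rewrite eA1 !mulmxA -perm_mxM mulVg perm_mx1 mul1mx -mulmxA -perm_mxM mulVg.
  by rewrite perm_mx1 mulmx1.
have uA1 : A1 \in unitmx by rewrite eA1 !unitmx_mul uA !unitmx_perm.
pose a := A1 0 0.
have ea : a = A i0 j0 by rewrite /a /A1 !mxE /s1 /s2 !tpermL.
have hA1 : forall k l, proper (A1 k l / a) by move=> k l; rewrite ea /A1 !mxE; apply: ha.
have a0' : a != 0 by rewrite ea.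
pose r := ursubmx A1; pose c := dlsubmx A1; pose B := drsubmx A1.
pose R := a^-1 *: r; pose C := a^-1 *: c; pose B' := B - c *m R.
have eA1b : A1 = block_mx 1%:M 0 C 1%:M *m block_mx a%:M 0 0 B' *m block_mx 1%:M R 0 1%:M.
  rewrite !mulmx_block !mulmx1 !mul1mx !mulmx0 !mul0mx !addr0 !add0r.
  rewrite -{1}[A1]submxK; congr block_mx.
  - have l0 : lshift n (0 : 'I_1) = 0 :> 'I_(1 + n) by apply: val_inj.
    by rewrite [LHS]mx11_scalar !mxE l0 /a /A1 !mxE.
  - by rewrite mul_scalar_mx /R scalerA mulfV // scale1r.
  - by rewrite mul_mx_scalar /C scalerA mulfV // scale1r.
  - by rewrite mul_mx_scalar /C scalerA mulfV // scale1r /B' addrC subrK.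
have uB' : B' \in unitmx.
  move: uA1; rewrite eA1b !unitmx_mul => /andP[/andP[_ hm] _].
  move: hm; rewrite !unitmxE det_ublock det_scalar1 !unitfE mulf_eq0 negb_or.
  by case/andP.
have [V1 [W1 [d1 [bV1 bW1 d10 eB']]]] := IH B' uB'.
have hC : proper_mx C.
  by move=> k l; move: (hA1 (rshift 1 k) (lshift n l)); rewrite !mxE mulrC.
have hR : proper_mx R.
  by move=> k l; move: (hA1 (lshift n k) (rshift 1 l)); rewrite !mxE mulrC.
exists (perm_mx s1^-1 *m (block_mx 1%:M 0 C 1%:M *m block_mx 1%:M 0 0 V1)).
exists ((block_mx 1%:M 0 0 W1 *m block_mx 1%:M R 0 1%:M) *m perm_mx s2).
exists (row_mx (a%:M : 'rV_1) d1); split.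
- apply: biproperM; first exact: biproper_perm.
  by apply: biproperM; [apply: biproper_lblock | apply: biproper_dblock].
- apply: biproperM; last exact: biproper_perm.
  by apply: biproperM; [apply: biproper_dblock | apply: biproper_ublock].
- move=> i; rewrite mxE; case: splitP => j _; last exact: d10.
  by rewrite ord1 mxE eqxx mulr1n.
have -> : diag_mx (row_mx (a%:M : 'rV_1) d1) = block_mx a%:M 0 0 (diag_mx d1).
  rewrite diag_mx_row; congr block_mx.
  by apply/matrixP => i j; rewrite !ord1 !mxE eqxx.
rewrite eA eA1b eB'; rewrite !mulmxA; congr (_ *m _).
rewrite -!mulmxA; congr (_ *m _); congr (_ *m _).
rewrite !mulmxA; congr (_ *m _).
by rewrite block_diag3.
Qed.

End Smith.

Lemma col_mul (R : pzRingType) m n p (A : 'M[R]_(m, n)) (B : 'M[R]_(n, p)) i :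
  col i (A *m B) = A *m col i B.
Proof. by apply/matrixP=> a b; rewrite !mxE; apply: eq_bigr => k _; rewrite !mxE. Qed.

Lemma diag_proper (K : fieldType) n (d : 'rV[ratf K]_n) :
  (forall i, proper (d 0 i)) -> proper_mx (diag_mx d).
Proof.
move=> h i j; rewrite mxE; case: (i == j) => /=; rewrite ?mulr1n ?mulr0n //.
exact: proper0.
Qed.

Lemma diag_sproper (K : fieldType) n (d : 'rV[ratf K]_n) :
  (forall i, sproper (d 0 i)) -> sproper_mx (diag_mx d).
Proof.
move=> h i j; rewrite mxE; case: (i == j) => /=; rewrite ?mulr1n ?mulr0n //.
exact: sproper0.
Qed.

Unset Implicit Arguments.

Theorem lemma3p2 (K : fieldType) (n n1 : nat)
  (L : 'M[{poly K}]_n) (L1 : 'M[{poly K}]_n1)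
  (HL : \det L != 0) (HL1 : \det L1 != 0)
  (Theta : 'M[ratf K]_(n1, n)) (HTheta : proper_mx Theta) :
  (forall x : 'cV[ratf K]_n, in_ker_rho L x -> in_ker_rho L1 (Theta *m x))
  <->
  (exists Theta1 : 'M[ratf K]_(n1, n),
     proper_mx Theta1 /\
     exists Psi : 'M[ratf K]_(n1, n),
       sproper_mx Psi /\ proper_mx (polymx L1 *m Psi) /\
       (Theta + polymx L1 *m Psi) *m polymx L = polymx L1 *m Theta1).
Proof.
have uL := polymx_unit HL; have uL1 := polymx_unit HL1.
set LL := polymx L in uL *; set LL1 := polymx L1 in uL1 *.
split; last first.
  case=> Th1 [hTh1 [Psi [hPsi [_ E]]]] v hv.
  have hy := ker_rho_sproper HL hv.
  case: hv => hv _.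
  apply: sproper_ker_rho; first exact: proper_mxM.
  have -> : invmx LL1 *m (Theta *m v) = Th1 *m (invmx LL *m v) - Psi *m v.
    have E2 : invmx LL1 *m Theta *m LL = Th1 - Psi *m LL.
      have E' := congr1 (mulmx (invmx LL1)) E.
      rewrite (mulKmx uL1 Th1) in E'.
      rewrite mulmxDl mulmxDr !mulmxA (mulVmx uL1) mul1mx in E'.
      by rewrite -E' addrK.
    set y := invmx LL *m v.
    have ev : v = LL *m y by rewrite /y (mulKVmx uL).
    by rewrite {1}ev !mulmxA E2 mulmxBl mulmxBl (mulmxK uL).
  apply: sproper_mxB; first exact: sproper_mxMl.
  exact: sproper_mxMr.
move=> H.
have [V [W [d [[V' [pV pV' VV']] [W' [pW pW' WW']] dn0 ELL]]]] := smith uL.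
have W'W : W' *m W = 1%:M := mulmx1C WW'.
have V'V : V' *m V = 1%:M := mulmx1C VV'.
pose pr i := excluded_middle_informative (proper (d 0 i)).
pose c := \row_i (if pr i then d 0 i * (polyF 'X)^-1 else 1).
pose g := \row_i (if pr i then 0 else 1 : ratf K).
pose e := \row_i (c 0 i / d 0 i).
have hcP : forall i, proper (d 0 i) -> c 0 i = d 0 i / polyF 'X /\ g 0 i = 0.
  by move=> i hp; rewrite !mxE; case: (pr i).
have hcN : forall i, ~ proper (d 0 i) -> c 0 i = 1 /\ g 0 i = 1.
  by move=> i hp; rewrite !mxE; case: (pr i).
have hc : forall i, proper (c 0 i).
  move=> i; rewrite mxE; case: (pr i) => hp; last exact: proper1.
  by apply: properM => //; apply: proper_t.
have hg : forall i, proper (g 0 i).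
  by move=> i; rewrite mxE; case: (pr i) => hp; [apply: proper0 | apply: proper1].
have he : forall i, sproper (e 0 i).
  move=> i; rewrite !mxE; case: (pr i) => hp.
    by rewrite mulrAC mulfV ?dn0 // mul1r; apply: sproper_t.
  by rewrite mul1r; apply: notproper_inv.
pose X := V *m diag_mx c.
have eX : invmx LL *m X = W' *m diag_mx e.
  have -> : X = LL *m (W' *m diag_mx e).
    have dd : diag_mx d *m diag_mx e = diag_mx c.
      rewrite mul_mx_diag; apply/matrixP => i j; rewrite !mxE.
      case: eqVneq => [->|]; rewrite ?mulr1n ?mulr0n ?mul0r //.
      by rewrite mulrC (divfK (dn0 j)).
    by rewrite ELL -!mulmxA (mulmxA W W') WW' mul1mx dd.
  by rewrite (mulKmx uL).
have hX : proper_mx X by apply: proper_mxM => //; apply: diag_proper.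
pose M := invmx LL1 *m Theta *m V.
have hM : forall k i, sproper (M k i * c 0 i).
  move=> k i.
  have hk : in_ker_rho L (col i X).
    apply: sproper_ker_rho; first by move=> a b; rewrite mxE; apply: hX.
    rewrite -col_mul eX => a b; rewrite mxE; apply: sproper_mxMl => //.
    exact: diag_sproper.
  have := ker_rho_sproper HL1 (H _ hk) k 0.
  rewrite mulmxA -col_mul mxE /X mulmxA -/M mul_mx_diag mxE.
  done.
pose Phi' := - (Theta *m V) *m diag_mx g.
pose Phi := Phi' *m V'.
exists (invmx LL1 *m (Theta + Phi) *m LL); split.
  have -> : invmx LL1 *m (Theta + Phi) *m LL = (M - M *m diag_mx g) *m diag_mx d *m W.
    rewrite ELL !mulmxA; congr (_ *m _ *m _).
    rewrite /Phi /Phi' mulmxDr mulmxDl /M; congr (_ + _).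
    by rewrite mulmxA -(mulmxA _ V' V) V'V mulmx1 mulNmx mulmxN !mulmxA.
  clearbody M Phi Phi' X e g c; apply: proper_mxM => // k i; rewrite [M *m _]mul_mx_diag mul_mx_diag !mxE.
  have [hp|hp] := pr i; last first.
    by have [_ ->] := hcN i hp; rewrite mulr1 subrr mul0r; apply: proper0.
  have [hc1 ->] := hcP i hp; rewrite mulr0 subr0.
  have := hM k i; rewrite hc1 => /sproperX.
  by rewrite mulrCA [polyF 'X * _]mulrCA (mulfV (@x_neq0 K)) mulr1.
exists (invmx LL1 *m Phi); split.
  have -> : invmx LL1 *m Phi = (- (M *m diag_mx g)) *m V'.
    by rewrite /Phi /Phi' /M mulmxA mulNmx mulmxN !mulmxA mulNmx.
  clearbody M Phi Phi' X e g c; apply: sproper_mxMr => // k i; rewrite mxE mul_mx_diag mxE; apply: sproperN.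
  have [hp|hp] := pr i; first by have [_ ->] := hcP i hp; rewrite mulr0; apply: sproper0.
  by have [hc1 ->] := hcN i hp; have := hM k i; rewrite hc1.
split.
  rewrite (mulKVmx uL1); apply: proper_mxM => //; apply: proper_mxM.
    by apply: proper_mxN; apply: proper_mxM.
  exact: diag_proper.
by rewrite (mulKVmx uL1) [RHS]mulmxA (mulKVmx uL1).
Qed.
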